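(* Let $k$ be odd and, for $1\le m\le n$, let $C_m$ be the set of positions with exactly $m$ coordinates in $\{0,k-1\}$ and all other coordinates equal to $(k-1)/2$. Let $2\le t\le n-1$, let $I\subseteq\{1,\dots,n\}$ with $|I|=n-t$, let $c_l\in\{0,k-1\}$ for $l\in I$, and let $L=\{p\in M^n: p_l=c_l\ \forall l\in I\}$ be the corresponding external $t$-dimensional layer. For distinct $i,j\notin I$, let $\rho$ be the rotation of $L$: the permutation of $M^n$ sending each $p\in L$ to $\psi_{i,j}(p)$ and fixing all positions outside $L$. Then $\rho$ fixes every position of $C_m$ for every $m\le n-t$, and $\rho$ restricted to $C_{n-t+1}$ is an odd permutation of $C_{n-t+1}$.
   Context: $k\ge2$, $n\ge3$ integers, $M=\{0,\dots,k-1\}$, positions are elements of $M^n$. For distinct $i,j$, $\psi_{i,j}:M^n\to M^n$ is defined by $(\psi_{i,j}p)_i=k-1-p_j$, $(\psi_{i,j}p)_j=p_i$, $(\psi_{i,j}p)_l=p_l$ for $l\notin\{i,j\}$. *)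

(* Defs.v *)
From mathcomp Require Import all_boot all_fingroup.
Set Implicit Arguments. Unset Strict Implicit. Unset Printing Implicit Defensive.

(* Positions: elements of M^n with M = {0,...,k-1} = 'I_k, coordinates indexed by 'I_n
   (coordinate l in 'I_n corresponds to coordinate l+1 in the paper). *)
Definition position (k n : nat) := {ffun 'I_n -> 'I_k}.

(* psi_{i,j}: (psi p)_i = k-1-p_j, (psi p)_j = p_i, others unchanged.
   rev_ord x has value k - x.+1 = k-1-x. *)
Definition psi (k n : nat) (i j : 'I_n) (p : position k n) : position k n :=
  [ffun l => if l == i then rev_ord (p j) else if l == j then p i else p l].

Definition extreme (k : nat) (x : 'I_k) : bool := (val x == 0) || (val x == k.-1).

Definition Cset (k n m : nat) : {set position k n} :=
  [set p : position k n | (#|[set l | extreme (p l)]| == m) &&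
     [forall l, ~~ extreme (p l) ==> (val (p l) == k.-1./2)]].

Definition layer (k n : nat) (I : {set 'I_n}) (c : 'I_n -> 'I_k) : {set position k n} :=
  [set p : position k n | [forall l in I, p l == c l]].

Definition layer_rot (k n : nat) (I : {set 'I_n}) (c : 'I_n -> 'I_k) (i j : 'I_n)
  (p : position k n) : position k n :=
  if p \in layer I c then psi i j p else p.
Arguments layer_rot {k n} I c i j p.
Arguments layer {k n} I c.
Arguments psi {k n} i j p.

(* Main.v *)
Require Import Defs.
From mathcomp Require Import all_boot all_fingroup zify.
Set Implicit Arguments. Unset Strict Implicit. Unset Printing Implicit Defensive.

Definition hh (k : nat) : 'I_k.+1 := inord (k./2).

Lemma hval k : val (hh k) = k./2.
Proof. rewrite /hh /= inordK //; rewrite ltnS; have := odd_double_half k; rewrite -addnn; lia. Qed.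

Lemma half_facts k : 2 <= k -> ~~ odd k -> 0 < k./2 /\ k./2 < k /\ k./2 + k./2 = k.
Proof.
move=> k2 ok; have := odd_double_half k; rewrite (negbTE ok) add0n -addnn => e.
lia.
Qed.

Lemma hh_nonext k : 2 <= k -> ~~ odd k -> ~~ extreme (hh k).
Proof.
move=> k2 ok; have [a [b e]] := half_facts k2 ok.
rewrite /extreme hval /=; apply/norP; split; apply/eqP; lia.
Qed.

Lemma rev_hh k : 2 <= k -> ~~ odd k -> rev_ord (hh k) = hh k.
Proof.
move=> k2 ok; have [a [b e]] := half_facts k2 ok.
apply: val_inj; rewrite /= hval; lia.
Qed.

Lemma ext_cases k (x : 'I_k.+1) : extreme x -> x = ord0 \/ x = ord_max.
Proof.
rewrite /extreme /= => /orP [] /eqP e; [left|right]; exact: val_inj.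
Qed.

Lemma rev0 k : rev_ord (ord0 : 'I_k.+1) = ord_max.
Proof. apply: val_inj => /=; lia. Qed.
Lemma revmax k : rev_ord (ord_max : 'I_k.+1) = ord0.
Proof. apply: val_inj => /=; lia. Qed.

Lemma nonext_hh k n m (p : position k.+1 n) l :
  p \in Cset k.+1 n m -> ~~ extreme (p l) -> p l = hh k.
Proof.
rewrite inE => /andP [_ /forallP /(_ l)] /implyP H /H /eqP e.
apply: val_inj; rewrite e hval //.
Qed.

Definition pt k n (I : {set 'I_n}) (c : 'I_n -> 'I_k.+1) (l : 'I_n) (v : 'I_k.+1)
  : position k.+1 n :=
  [ffun l' => if l' \in I then c l' else if l' == l then v else hh k].

Lemma pt_in_L k n (I : {set 'I_n}) (c : 'I_n -> 'I_k.+1) l v : @pt k n I c l v \in layer I c.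
Proof. rewrite inE; apply/forall_inP => l' H; rewrite ffunE H //. Qed.

Lemma pt_in_C k n (I : {set 'I_n}) (c : 'I_n -> 'I_k.+1) l v : 2 <= k -> ~~ odd k -> l \notin I ->
  (forall l, l \in I -> extreme (c l)) -> extreme v ->
  @pt k n I c l v \in Cset k.+1 n #|I|.+1.
Proof.
move=> k2 ok lI cI ev; rewrite inE; apply/andP; split.
  have -> : [set l' | extreme (pt I c l v l')] = l |: I.
    apply/setP => l'; rewrite !inE ffunE.
    case: (boolP (l' \in I)) => H; first by rewrite orbT cI.
    case: (l' =P l) => //= _; rewrite (negbTE (hh_nonext k2 ok)) //.
  by rewrite cardsU1 lI.
apply/forallP => l'; apply/implyP; rewrite ffunE.
case: (boolP (l' \in I)) => H; first by rewrite cI.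
case: (l' =P l) => _; first by rewrite ev.
by rewrite hval.
Qed.

Lemma psi_pt_i k n (I : {set 'I_n}) (c : 'I_n -> 'I_k.+1) i j v : 2 <= k -> ~~ odd k -> i \notin I -> j \notin I -> i != j ->
  psi i j (@pt k n I c i v) = pt I c j v.
Proof.
move=> k2 ok iI jI ij; have ji : (j == i) = false by rewrite eq_sym; apply/negbTE.
apply/ffunP => l; rewrite !ffunE.
case: (l =P i) => [->|/eqP/negbTE li].
  by rewrite (negbTE iI) (negbTE jI) ji (negbTE ij) rev_hh.
case: (l =P j) => [->|/eqP/negbTE lj].
  by rewrite (negbTE iI) (negbTE jI) eqxx.
by rewrite ?li ?lj; case: (l \in I).
Qed.

Lemma psi_pt_j k n (I : {set 'I_n}) (c : 'I_n -> 'I_k.+1) i j v : i \notin I -> j \notin I -> i != j ->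
  psi i j (@pt k n I c j v) = pt I c i (rev_ord v).
Proof.
move=> iI jI ij; have ji : (j == i) = false by rewrite eq_sym; apply/negbTE.
apply/ffunP => l; rewrite !ffunE.
case: (l =P i) => [->|/eqP/negbTE li].
  by rewrite (negbTE iI) (negbTE jI) eqxx.
case: (l =P j) => [->|/eqP/negbTE lj].
  by rewrite (negbTE iI) (negbTE jI) ?(negbTE ij) ?ji ?eqxx.
by rewrite ?li ?lj; case: (l \in I).
Qed.

Lemma psi_fix k n i j (p : position k.+1 n) : 2 <= k -> ~~ odd k ->
  p i = hh k -> p j = hh k -> psi i j p = p.
Proof.
move=> k2 ok pi pj; apply/ffunP => l; rewrite !ffunE.
case: (l =P i) => [->|_]; first by rewrite pj pi rev_hh.
case: (l =P j) => [->|_] //; by rewrite pi pj.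
Qed.

Lemma I_sub_E k n (I : {set 'I_n}) c (p : position k.+1 n) :
  (forall l, l \in I -> extreme (c l)) -> p \in layer I c ->
  I \subset [set l | extreme (p l)].
Proof.
move=> cI; rewrite inE => /forall_inP H; apply/subsetP => l lI.
by rewrite inE (eqP (H l lI)) cI.
Qed.

Lemma small_fix k n m (I : {set 'I_n}) c (p : position k.+1 n) l :
  (forall l, l \in I -> extreme (c l)) -> p \in layer I c ->
  p \in Cset k.+1 n m -> m <= #|I| -> l \notin I -> p l = hh k.
Proof.
move=> cI pL pC mI lI; eapply nonext_hh; first exact pC.
have sub := I_sub_E cI pL.
have := pC; rewrite inE => /andP [/eqP cE _].
have eq : I == [set l | extreme (p l)] by rewrite eqEcard sub cE.
by move: lI; rewrite (eqP eq) inE.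
Qed.

Lemma pt_eq k n (I : {set 'I_n}) c (p : position k.+1 n) l :
  (forall l, l \in I -> extreme (c l)) -> p \in layer I c ->
  p \in Cset k.+1 n #|I|.+1 -> l \notin I -> extreme (p l) -> p = pt I c l (p l).
Proof.
move=> cI pL pC lI el.
have sub : l |: I \subset [set l | extreme (p l)].
  by rewrite subUset sub1set inE el (I_sub_E cI pL).
have := pC; rewrite inE => /andP [/eqP cE _].
have eqE2 : l |: I == [set l | extreme (p l)].
  by rewrite eqEcard sub cE cardsU1 lI add1n ltnSn.
apply/ffunP => l'; rewrite ffunE.
case: (boolP (l' \in I)) => H.
  by move: pL; rewrite inE => /forall_inP /(_ l' H) /eqP.
case: (l' =P l) => [->//|ne].
eapply nonext_hh; first exact pC.
have : l' \notin l |: I by rewrite !inE negb_or H andbT; apply/eqP.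
by rewrite (eqP eqE2) inE.
Qed.

Lemma pt_at k n (I : {set 'I_n}) (c : 'I_n -> 'I_k.+1) l v : l \notin I -> pt I c l v l = v.
Proof. by move=> lI; rewrite ffunE (negbTE lI) eqxx. Qed.

Lemma pt_other k n (I : {set 'I_n}) (c : 'I_n -> 'I_k.+1) l l' v :
  l' \notin I -> l' != l -> pt I c l v l' = hh k.
Proof. by move=> lI ne; rewrite ffunE (negbTE lI) (negbTE ne). Qed.

Lemma ext_ne_hh k (x : 'I_k.+1) : 2 <= k -> ~~ odd k -> extreme x -> x != hh k.
Proof. by move=> k2 ok ex; apply/eqP => e; move: ex; rewrite e (negbTE (hh_nonext k2 ok)). Qed.

Theorem mainTheorem11 (k n t : nat) (I : {set 'I_n}) (c : 'I_n -> 'I_k) (i j : 'I_n) :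
  2 <= k -> 3 <= n -> odd k ->
  2 <= t -> t <= n - 1 ->
  #|I| = n - t ->
  (forall l, l \in I -> extreme (c l)) ->
  i != j -> i \notin I -> j \notin I ->
  (forall m, 1 <= m -> m <= n - t ->
     forall p, p \in Cset k n m -> layer_rot I c i j p = p) /\
  (exists s : {perm {p : position k n | p \in Cset k n (n - t).+1}},
     (forall x, val (s x) = layer_rot I c i j (val x)) /\ odd_perm s).
Proof.
move: c; case: k => [|k] c //= k1 _ ok _ _ HI cI ij iI jI.
have k2 : 2 <= k by clear -k1 ok; destruct k as [|[|k0]].
split.
  move=> m _ mle p pC; rewrite /layer_rot; case: ifP => // pL.
  by apply: psi_fix => //; apply: (small_fix cI pL pC); rewrite ?HI.
rewrite -HI.
have ji : j != i by rewrite eq_sym.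
have e0 : extreme (ord0 : 'I_k.+1) by [].
have em : extreme (ord_max : 'I_k.+1) by rewrite /extreme /= eqxx orbT.
pose A : {p : position k.+1 n | p \in Cset k.+1 n #|I|.+1} := exist (fun p => p \in Cset k.+1 n #|I|.+1) _ (pt_in_C k2 ok iI cI e0).
pose B : {p : position k.+1 n | p \in Cset k.+1 n #|I|.+1} := exist (fun p => p \in Cset k.+1 n #|I|.+1) _ (pt_in_C k2 ok jI cI e0).
pose C : {p : position k.+1 n | p \in Cset k.+1 n #|I|.+1} := exist (fun p => p \in Cset k.+1 n #|I|.+1) _ (pt_in_C k2 ok iI cI em).
pose D : {p : position k.+1 n | p \in Cset k.+1 n #|I|.+1} := exist (fun p => p \in Cset k.+1 n #|I|.+1) _ (pt_in_C k2 ok jI cI em).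
have h0 := ext_ne_hh k2 ok e0.
have hm := ext_ne_hh k2 ok em.
have m0 : (ord_max : 'I_k.+1) != ord0 by apply/eqP => /(congr1 val) /=; lia.
have neq_at : forall (x y : {p : position k.+1 n | p \in Cset k.+1 n #|I|.+1}) l,
    val x l != val y l -> x != y.
  by move=> x y l ne; apply/eqP => e; move: ne; rewrite e eqxx.
have AB : A != B by apply: (neq_at _ _ i); rewrite /= pt_at // pt_other // eq_sym.
have AC : A != C by apply: (neq_at _ _ i); rewrite /= !pt_at // eq_sym.
have AD : A != D by apply: (neq_at _ _ i); rewrite /= pt_at // pt_other // eq_sym.
have BC : B != C by apply: (neq_at _ _ i); rewrite /= pt_at // pt_other // eq_sym.
have BD : B != D by apply: (neq_at _ _ j); rewrite /= !pt_at // eq_sym.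
have CD : C != D by apply: (neq_at _ _ i); rewrite /= pt_at // pt_other // eq_sym.
exists (tperm A B * tperm A C * tperm A D)%g; split; last first.
  by rewrite !odd_permM !odd_tperm AB AC AD.
have BA : B != A by rewrite eq_sym.
have CA : C != A by rewrite eq_sym.
have DA : D != A by rewrite eq_sym.
have CB : C != B by rewrite eq_sym.
have DB : D != B by rewrite eq_sym.
have DC : D != C by rewrite eq_sym.
set u := (tperm A B * tperm A C * tperm A D)%g.
have uA : u A = B by rewrite !permM tpermL tpermD // tpermD.
have uB : u B = C by rewrite !permM tpermR tpermL tpermD.
have uC : u C = D by rewrite !permM (tpermD AC BC) tpermR tpermL.
have uD : u D = A by rewrite !permM (tpermD AD BD) (tpermD AD CD) tpermR.
have uX : forall x, A != x -> B != x -> C != x -> D != x -> u x = x.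
  by move=> x ax bx cx dx; rewrite !permM !tpermD.
move=> x.
case: (boolP (val x \in layer I c)) => xL; last first.
  rewrite /layer_rot (negbTE xL).
  have nx : forall Y, val Y \in layer I c -> Y != x.
    by move=> Y YL; apply/eqP => e; move: xL; rewrite -e YL.
  by rewrite uX //; apply: nx; exact: pt_in_L.
rewrite /layer_rot xL.
case: (boolP (extreme (val x i))) => ei.
  have e := pt_eq cI xL (valP x) iI ei.
  case: (ext_cases ei) => v0.
    have -> : x = A by apply: val_inj; rewrite /= e v0.
    by rewrite uA /= psi_pt_i.
  have -> : x = C by apply: val_inj; rewrite /= e v0.
  by rewrite uC /= psi_pt_i.
have xi := nonext_hh (valP x) ei.
case: (boolP (extreme (val x j))) => ej.
  have e := pt_eq cI xL (valP x) jI ej.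
  case: (ext_cases ej) => v0.
    have -> : x = B by apply: val_inj; rewrite /= e v0.
    by rewrite uB /= psi_pt_j // rev0.
  have -> : x = D by apply: val_inj; rewrite /= e v0.
  by rewrite uD /= psi_pt_j // revmax.
have xj := nonext_hh (valP x) ej.
rewrite psi_fix // uX //.
- by apply: (neq_at _ _ i); rewrite /= pt_at // xi.
- by apply: (neq_at _ _ j); rewrite /= pt_at // xj.
- by apply: (neq_at _ _ i); rewrite /= pt_at // xi.
- by apply: (neq_at _ _ j); rewrite /= pt_at // xj.
Qed.
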